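(* Let $\Psi$ be a marked $A_3$ simplicial complex satisfying CCCC. (iii.a) If $v,u_1,w,u_2$ is an embedded closed edge path in $\Psi$ with $v$ of type $\hat b$, $u_1,u_2$ of type $\hat c$ and $w$ of type $\hat a$, then $v$ and $w$ are joined by an edge and $\{v,u_1,w\}$ and $\{v,w,u_2\}$ are $2$-simplices of $\Psi$. (iii.b) The same holds with the types $\hat a$ and $\hat c$ interchanged.
   Context: Let $\Delta$ be the spherical triangle with vertices labelled $\hat a,\hat b,\hat c$, with angle $\pi/3$ at $\hat a$ and $\hat c$ and angle $\pi/2$ at $\hat b$. A marked $A_3$ simplicial complex is a homogeneous $2$-dimensional simplicial complex $\Psi$ in which each $2$-simplex $\sigma$ has an isomorphism $m_\sigma:\sigma\to\Delta$ such that $m_\sigma(x)=m_{\sigma'}(x)$ for all $x\in\sigma\cap\sigma'$; a vertex has type $\hat a,\hat b,\hat c$ according to the label of its image under any marking. $\Psi$ satisfies CCCC if: (1) the link of every vertex of type $\hat a$ or $\hat c$ has girth at least $6$; (2) the link of every vertex of type $\hat b$ is a complete bipartite graph containing an embedded $4$-cycle; (3) (i) every embedded closed edge path $w_1,u_1,w_2,u_2$ with $w_1,w_2$ of type $\hat a$ and $u_1,u_2$ of type $\hat c$ is filled by a vertex $v$ of type $\hat b$ such that $\{v,w_1,u_1\},\{v,u_1,w_2\},\{v,w_2,u_2\},\{v,u_2,w_1\}$ are $2$-simplices; (ii.a) every embedded closed edge path of length $6$ alternating between types $\hat a$ and $\hat b$ is filled by a vertex of type $\hat c$ forming a $2$-simplex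 with each of its six edges; (ii.b) the same with $\hat a$ and $\hat c$ interchanged. *)

(* Defs.v *)
From Stdlib Require Import Arith.

(** Vertex types: the labels of the vertices of the model triangle Delta. *)
Inductive vtype := ta | tb | tc .

(** The complex is given by its set of 2-simplices [tri], a predicate on
    (unordered, hence permutation-invariant) triples of vertices.  Since it is
    homogeneous of dimension 2, its simplices are exactly the non-empty faces
    of the 2-simplices, so [tri] determines it; we require every vertex to lie
    in some 2-simplex.  A marking (compatible isomorphisms m_sigma onto Delta)
    is the same as a type function [typ] on vertices assigning pairwise
    distinct types to the three vertices of each 2-simplex. *)
Record A3complex := {
  vert : Type;
  tri : vert -> vert -> vert -> Prop;
  typ : vert -> vtype;
  tri_swap12 : forall x y z, tri x y z -> tri y x z;
  tri_swap23 : forall x y z, tri x y z -> tri x z y;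
  tri_types : forall x y z, tri x y z ->
      typ x <> typ y /\ typ y <> typ z /\ typ x <> typ z;
  homogeneous : forall x, exists y z, tri x y z
}.

Section Defs.
Variable X : A3complex.
Local Notation V := (vert X).

Definition edge (x y : V) : Prop := x <> y /\ exists z, tri X x y z.

Definition embedded_cycle {T : Type} (R : T -> T -> Prop) (n : nat)
    (f : nat -> T) : Prop :=
  (forall i j, i < n -> j < n -> f i = f j -> i = j) /\
  (forall i, i < n -> R (f i) (f ((S i) mod n))).

Definition link_vertex (v u : V) : Prop := edge v u.
Definition link_adj (v u w : V) : Prop := tri X v u w.

Definition link_girth_ge6 (v : V) : Prop :=
  forall n (f : nat -> V), 3 <= n <= 5 ->
    (forall i, i < n -> link_vertex v (f i)) ->
    ~ embedded_cycle (link_adj v) n f.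

Definition link_complete_bipartite (v : V) : Prop :=
  exists part : V -> bool,
    forall u w, link_vertex v u -> link_vertex v w ->
      (link_adj v u w <-> part u <> part w).

Definition link_has_4cycle (v : V) : Prop :=
  exists f : nat -> V, (forall i, i < 4 -> link_vertex v (f i)) /\
    embedded_cycle (link_adj v) 4 f.

Definition hexagons_filled (t1 t2 t3 : vtype) : Prop :=
  forall f : nat -> V,
    embedded_cycle edge 6 f ->
    (forall i, i < 6 -> typ X (f i) = t1 \/ typ X (f i) = t2) ->
    (forall i, i < 6 -> typ X (f i) <> typ X (f ((S i) mod 6))) ->
    exists c, typ X c = t3 /\
      forall i, i < 6 -> tri X c (f i) (f ((S i) mod 6)).

Definition CCCC : Prop :=
  (forall v, typ X v = ta \/ typ X v = tc -> link_girth_ge6 v) /\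
  (forall v, typ X v = tb ->
     link_complete_bipartite v /\ link_has_4cycle v) /\
  (forall w1 u1 w2 u2,
     typ X w1 = ta -> typ X w2 = ta -> typ X u1 = tc -> typ X u2 = tc ->
     w1 <> w2 -> u1 <> u2 ->
     edge w1 u1 -> edge u1 w2 -> edge w2 u2 -> edge u2 w1 ->
     exists v, typ X v = tb /\
       tri X v w1 u1 /\ tri X v u1 w2 /\ tri X v w2 u2 /\ tri X v u2 w1) /\
  hexagons_filled ta tb tc /\
  hexagons_filled tc tb ta.

End Defs.

(* Main.v *)
Require Import Defs.
From Stdlib Require Import Arith Lia Classical.

Lemma edge_sym (X : A3complex) x y : edge X x y -> edge X y x.
Proof. intros [H [z Hz]]. split; [congruence|]. exists z. now apply tri_swap12. Qed.

Lemma tri_ty (X : A3complex) x y z : tri X x y z ->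
  typ X x <> typ X y /\ typ X y <> typ X z /\ typ X x <> typ X z.
Proof. apply tri_types. Qed.

Lemma tri_rot (X : A3complex) x y z : tri X x y z -> tri X y z x.
Proof. intro H. apply tri_swap12 in H. now apply tri_swap23. Qed.

Lemma tri_edge (X : A3complex) x y z : tri X x y z -> edge X x y.
Proof. intro H. split. - intro E. subst. destruct (tri_ty X _ _ _ H) as [A _]. now apply A.
  - now exists z. Qed.

Lemma blink_aux (X : A3complex) v (part : vert X -> bool)
  (Hpart : forall u w, link_vertex X v u -> link_vertex X v w ->
      (link_adj X v u w <-> part u <> part w))
  (Hb : typ X v = tb) t w' b :
  tri X v w' b -> edge X v w' -> edge X v b -> typ X w' = t ->
  forall u, edge X v u -> typ X u <> tb -> typ X u <> t -> tri X v w' u.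
Proof.
  intros T Ew Eb Ht u Eu Hu1 Hu2.
  destruct (tri_ty X _ _ _ T) as [A1 [A2 A3]].
  assert (Pwb : part w' <> part b) by (apply (Hpart w' b); auto).
  assert (Pub : part u = part b).
  { destruct (Bool.bool_dec (part u) (part b)) as [e|ne]; auto.
    apply (Hpart u b) in ne; auto. destruct (tri_ty X _ _ _ ne) as [B1 [B2 B3]].
    exfalso. destruct (typ X u), (typ X b), (typ X w'), (typ X v), t; congruence. }
  apply (Hpart w' u); auto. congruence.
Qed.

Lemma blink (X : A3complex) v (Hb : typ X v = tb)
  (Hcb : link_complete_bipartite X v) (H4 : link_has_4cycle X v) t (Ht : t <> tb) w :
  exists w', typ X w' = t /\ w' <> w /\ edge X v w' /\
    forall u, edge X v u -> typ X u <> tb -> typ X u <> t -> tri X v w' u.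
Proof.
  destruct Hcb as [part Hpart]. destruct H4 as [f [Hl [Hinj Hadj]]].
  unfold link_adj in Hadj.
  pose proof (Hadj 0 ltac:(lia)) as T0. pose proof (Hadj 1 ltac:(lia)) as T1.
  pose proof (Hadj 2 ltac:(lia)) as T2. pose proof (Hadj 3 ltac:(lia)) as T3.
  simpl in T0, T1, T2, T3.
  assert (Hac : f 0 <> f 2) by (intro E; apply Hinj in E; lia).
  assert (Hbd : f 1 <> f 3) by (intro E; apply Hinj in E; lia).
  destruct (tri_ty X _ _ _ T0) as [A1 [A2 A3]].
  destruct (tri_ty X _ _ _ T1) as [B1 [B2 B3]].
  destruct (tri_ty X _ _ _ T2) as [C1 [C2 C3]].
  destruct (tri_ty X _ _ _ T3) as [D1 [D2 D3]].
  pose proof (Hl 0 ltac:(lia)). pose proof (Hl 1 ltac:(lia)).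
  pose proof (Hl 2 ltac:(lia)). pose proof (Hl 3 ltac:(lia)).
  destruct (classic (typ X (f 0) = t)) as [G0|G0].
  - assert (G2 : typ X (f 2) = t)
      by (destruct (typ X (f 0)), (typ X (f 1)), (typ X (f 2)), (typ X v), t; congruence).
    destruct (classic (f 0 = w)) as [E|E].
    + exists (f 2). split; [auto|]. split; [congruence|]. split; [auto|].
      apply (blink_aux X v part Hpart Hb t (f 2) (f 3)); auto.
    + exists (f 0). split; [auto|]. split; [auto|]. split; [auto|].
      apply (blink_aux X v part Hpart Hb t (f 0) (f 1)); auto.
  - assert (G1 : typ X (f 1) = t)
      by (destruct (typ X (f 0)), (typ X (f 1)), (typ X v), t; congruence).
    assert (G3 : typ X (f 3) = t)
      by (destruct (typ X (f 3)), (typ X (f 1)), (typ X (f 2)), (typ X v), t; congruence).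
    destruct (classic (f 1 = w)) as [E|E].
    + exists (f 3). split; [auto|]. split; [congruence|]. split; [auto|].
      apply (blink_aux X v part Hpart Hb t (f 3) (f 0)); auto.
    + exists (f 1). split; [auto|]. split; [auto|]. split; [auto|].
      apply (blink_aux X v part Hpart Hb t (f 1) (f 2)); auto.
Qed.

Lemma main (X : A3complex) tw tu (Hwb : tw <> tb) (Hub : tu <> tb) (Hwu : tw <> tu)
  (Hbl : forall v, typ X v = tb -> link_complete_bipartite X v /\ link_has_4cycle X v)
  (Hg : forall x, typ X x = tw -> link_girth_ge6 X x)
  (Hfill : forall w1 u1 w2 u2, typ X w1 = tw -> typ X w2 = tw -> typ X u1 = tu ->
     typ X u2 = tu -> w1 <> w2 -> u1 <> u2 -> edge X w1 u1 -> edge X u1 w2 ->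
     edge X w2 u2 -> edge X u2 w1 ->
     exists v', typ X v' = tb /\ tri X v' w1 u1 /\ tri X v' u1 w2 /\
        tri X v' w2 u2 /\ tri X v' u2 w1) :
  forall (v u1 w u2 : vert X),
     typ X v = tb -> typ X u1 = tu -> typ X u2 = tu -> typ X w = tw ->
     u1 <> u2 -> v <> w ->
     edge X v u1 -> edge X u1 w -> edge X w u2 -> edge X u2 v ->
     edge X v w /\ tri X v u1 w /\ tri X v w u2.
Proof.
  intros v u1 w u2 Tv Tu1 Tu2 Tw N12 Nvw E1 E2 E3 E4.
  destruct (Hbl v Tv) as [Hcb H4].
  destruct (blink X v Tv Hcb H4 tw Hwb w) as [w' [Tw' [Nw' [Ew' Hw']]]].
  assert (R1 : tri X v w' u1) by (apply Hw'; auto; congruence).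
  assert (R2 : tri X v w' u2) by (apply Hw'; [apply edge_sym; auto|congruence|congruence]).
  assert (Ew1 : edge X w' u1) by (apply (tri_edge X _ _ v); apply tri_rot; auto).
  assert (Ew2 : edge X u2 w') by (apply edge_sym; apply (tri_edge X _ _ v); apply tri_rot; auto).
  destruct (Hfill w' u1 w u2 Tw' Tw Tu1 Tu2 Nw' N12 Ew1 E2 E3 Ew2)
    as [v' [Tv' [S1 [S2 [S3 S4]]]]].
  destruct (classic (v = v')) as [e|ne].
  - subst v'. split; [|split; auto].
    split; auto. exists u2. auto.
  - exfalso.
    apply (Hg w' Tw' 4 (fun i => match i with 0 => v | 1 => u1 | 2 => v' | _ => u2 end)).
    + lia.
    + intros i Hi. unfold link_vertex.
      destruct i as [|[|[|[|i]]]]; try lia; simpl.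
      * apply edge_sym; auto.
      * auto.
      * apply (tri_edge X _ _ u1). apply tri_swap12. auto.
      * apply edge_sym; auto.
    + split.
      * intros i j Hi Hj E.
        destruct i as [|[|[|[|i]]]]; destruct j as [|[|[|[|j]]]]; try lia;
          simpl in E; subst; congruence.
      * intros i Hi. unfold link_adj.
        destruct i as [|[|[|[|i]]]]; try lia; simpl.
        -- apply tri_swap12; exact R1.
        -- apply tri_rot; exact S1.
        -- apply tri_rot, tri_rot; exact S4.
        -- apply tri_rot; exact R2.
Qed.

Theorem lemma5p6 (X : A3complex) (HX : CCCC X) :
  (* (iii.a) *)
  (forall (v u1 w u2 : vert X),
     typ X v = tb -> typ X u1 = tc -> typ X u2 = tc -> typ X w = ta ->
     u1 <> u2 -> v <> w ->
     edge X v u1 -> edge X u1 w -> edge X w u2 -> edge X u2 v ->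
     edge X v w /\ tri X v u1 w /\ tri X v w u2) /\
  (* (iii.b) *)
  (forall (v u1 w u2 : vert X),
     typ X v = tb -> typ X u1 = ta -> typ X u2 = ta -> typ X w = tc ->
     u1 <> u2 -> v <> w ->
     edge X v u1 -> edge X u1 w -> edge X w u2 -> edge X u2 v ->
     edge X v w /\ tri X v u1 w /\ tri X v w u2).
Proof.
  destruct HX as [H1 [H2 [H3 _]]]. split.
  - apply main; try discriminate; auto.
  - apply main; try discriminate; auto.
    intros w1 u1 w2 u2 Tw1 Tw2 Tu1 Tu2 N1 N2 E1 E2 E3 E4.
    destruct (H3 u1 w2 u2 w1 Tu1 Tu2 Tw2 Tw1 N2 (not_eq_sym N1) E2 E3 E4 E1)
      as [v' [Tv [S1 [S2 [S3 S4]]]]].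
    exists v'. auto.
Qed.
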